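(* Let $\mathcal{D}=(\mathcal{V},\mathcal{E})$ be a simple digraph with $\mathcal{V}=\{1,\ldots,n\}$, $n\ge 2$, and let $L$ be its Laplacian matrix. Then $r_{\max}(\mathcal{D})$ equals the optimal value of the mixed integer linear program $$\min_{t,\,b}\ t \quad\text{subject to}\quad t\in\mathbb{R},\ b\in\mathbb{Z}^{2n},\ 0\le t,\ \begin{bmatrix}L&0\\0&L\end{bmatrix} b\le t\begin{bmatrix}\mathbf 1_n\\ \mathbf 1_n\end{bmatrix},\ 0\le b\le \mathbf 1_{2n},\ \begin{bmatrix}I_n & I_n\end{bmatrix} b\le \mathbf 1_n,$$ $$1\le \begin{bmatrix}\mathbf 1_n^T & 0\end{bmatrix} b\le n-1,\qquad 1\le \begin{bmatrix}0 & \mathbf 1_n^T\end{bmatrix} b\le n-1,$$ where all vector inequalities are componentwise and $I_n$ is the $n\times n$ identity.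
   Context: A simple digraph has no self-loops and at most one directed edge $(i,j)$ from $i$ to $j$. For $j\in\mathcal{V}$, $\mathcal{N}_j=\{i\in\mathcal{V}:(i,j)\in\mathcal{E}\}$ is the set of in-neighbors of $j$. The Laplacian $L\in\mathbb{R}^{n\times n}$ has entries $L_{j,j}=|\mathcal{N}_j|$, $L_{j,i}=-1$ if $i\neq j$ and $i\in\mathcal{N}_j$, and $L_{j,i}=0$ if $i\ne j$ and $i\notin\mathcal{N}_j$. For $r\in\mathbb{Z}_{\ge 0}$, a nonempty subset $S\subseteq\mathcal{V}$ is $r$-reachable if there exists $i\in S$ with $|\mathcal{N}_i\setminus S|\ge r$. A digraph on $n\ge 2$ nodes is $r$-robust if for every pair of nonempty, disjoint subsets of $\mathcal{V}$, at least one of them is $r$-reachable. $r_{\max}(\mathcal{D})$ denotes the largest integer $r\ge 0$ for which $\mathcal{D}$ is $r$-robust. $\mathbf 1_m$ is the all-ones vector of length $m$ and $0$ denotes zero blocks of appropriate size. *)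

(* Defs.v *)
From HB Require Import structures.
From mathcomp Require Import all_boot all_order all_algebra.
Set Implicit Arguments. Unset Strict Implicit. Unset Printing Implicit Defensive.
Import Order.TTheory GRing.Theory Num.Theory.

(* A simple digraph on V = 'I_n is an irreflexive relation e : rel 'I_n;
   e i j means there is a directed edge (i, j) from i to j. *)
Definition simple_digraph (n : nat) (e : rel 'I_n) : Prop := forall i, ~~ e i i.

Definition in_nbrs (n : nat) (e : rel 'I_n) (j : 'I_n) : {set 'I_n} :=
  [set i | e i j].

Definition r_reachable (n : nat) (e : rel 'I_n) (r : nat) (S : {set 'I_n}) : bool :=
  (S != set0) && [exists i in S, r <= #|in_nbrs e i :\: S|].

Definition r_robust (n : nat) (e : rel 'I_n) (r : nat) : bool :=
  [forall S1 : {set 'I_n}, forall S2 : {set 'I_n},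
    [&& S1 != set0, S2 != set0 & [disjoint S1 & S2]] ==>
    r_reachable e r S1 || r_reachable e r S2].

(* r_max: the largest r >= 0 with D r-robust.  Since every digraph is
   0-robust and r-robustness with r >= n is impossible for n >= 2
   (|N_i \ S| <= n - 1), the maximum may be taken over r <= n. *)
Definition r_max (n : nat) (e : rel 'I_n) : nat :=
  \max_(r < n.+1 | r_robust e r) r.

Local Open Scope ring_scope.

Definition laplacian (R : pzRingType) (n : nat) (e : rel 'I_n) : 'M[R]_n :=
  \matrix_(j < n, i < n)
    if i == j then (#|in_nbrs e j|)%:R else if e i j then -1 else 0.


Definition milp_feasible (R : realFieldType) (n : nat) (e : rel 'I_n)
    (t : R) (b : 'cV[int]_(n + n)) : Prop :=
  let L := laplacian R e in
  let bR := map_mx (fun z : int => z%:~R : R) b in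
  [/\ 0 <= t,
      (forall i, (block_mx L 0 0 L *m bR) i 0 <= t),
      (forall i, 0 <= b i 0 <= 1),
      (forall i, (row_mx 1%:M 1%:M *m b) i 0 <= 1)
    & ( 1 <= (row_mx (const_mx 1 : 'rV[int]_n) 0 *m b) 0 0 <= (n - 1)%N%:Z
      /\ 1 <= (row_mx 0 (const_mx 1 : 'rV[int]_n) *m b) 0 0 <= (n - 1)%N%:Z)].

(* Main.v *)
Require Import Defs.
From HB Require Import structures.
From mathcomp Require Import all_boot all_order all_algebra ring lra zify.
Import Order.TTheory GRing.Theory Num.Theory.
Local Open Scope ring_scope.

Lemma sum_ind (R: pzRingType) (T: finType) (P: pred T) :
  \sum_i ((P i)%:R : R) = #|P|%:R.
Proof.
rewrite (bigID P) /= [X in _ + X]big1 => [|i /negbTE->//].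
rewrite addr0 (eq_bigr (fun=> 1)) => [|i ->//].
by rewrite sumr_const.
Qed.

Lemma Lind (R : realFieldType) n (e : rel 'I_n) (hs: simple_digraph e) (S : {set 'I_n}) j :
 (laplacian R e *m \col_i ((i \in S)%:R : R)) j 0 =
   (j \in S)%:R * #|in_nbrs e j|%:R - #|in_nbrs e j :&: S|%:R.
Proof.
rewrite mxE.
transitivity (\sum_i ((i == j)%:R * ((j \in S)%:R * #|in_nbrs e j|%:R)
    - ((i \in in_nbrs e j :&: S)%:R : R))).
  apply eq_bigr => i _; rewrite !mxE in_setI /in_nbrs inE.
  case: eqP => [->|ne].
    by rewrite (negbTE (hs j)) /=; case: (j \in S) => /=; ring.
  by case: (e i j); case: (i \in S) => /=; ring.
rewrite sumrB -mulr_suml sum_ind.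
have -> : #|(fun i => i == j)| = 1%N by apply: card1.
by rewrite sum_ind mul1r.
Qed.

Lemma Lind_in (R : realFieldType) n (e : rel 'I_n) (hs: simple_digraph e) (S : {set 'I_n}) j :
 j \in S ->
 (laplacian R e *m \col_i ((i \in S)%:R : R)) j 0 = #|in_nbrs e j :\: S|%:R.
Proof.
move=> jS; rewrite Lind // jS mul1r -(cardsID S (in_nbrs e j)) natrD.
ring.
Qed.

Lemma Lind_out (R : realFieldType) n (e : rel 'I_n) (hs: simple_digraph e) (S : {set 'I_n}) j :
 j \notin S ->
 (laplacian R e *m \col_i ((i \in S)%:R : R)) j 0 <= 0.
Proof.
move=> /negbTE jS; rewrite Lind // jS mul0r sub0r oppr_le0 ler0n //.
Qed.

Lemma map_ind (R : realFieldType) n (S : {set 'I_n}) :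
  map_mx (fun z : int => z%:~R : R) (\col_i ((i \in S)%:R : int)) = \col_i ((i \in S)%:R : R).
Proof.
apply/matrixP => i j; rewrite !mxE; by case: (i \in S).
Qed.

Lemma robust_lt n (e : rel 'I_n) (hn : (2 <= n)%N) r : r_robust e r -> (r < n)%N.
Proof.
have h0 : (0 < n)%N by lia.
have h1 : (1 < n)%N by lia.
pose a := Ordinal h0; pose b := Ordinal h1.
move/forallP/(_ [set a])/forallP/(_ [set b]).
have ab : a != b by [].
rewrite -!card_gt0 !cards1 /= disjoints1 inE ab /=.
have key : forall x : 'I_n, r_reachable e r [set x] -> (r < n)%N.
  move=> x /andP [_ /existsP [i /andP [_ hi]]].
  have : (#|in_nbrs e i :\: [set x]| <= #|[set~ x]|)%N.
    by apply: subset_leq_card; rewrite setDE subsetIr.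
  rewrite cardsC1 card_ord; lia.
by case/orP; apply: key.
Qed.

Lemma robust0 n (e : rel 'I_n) : r_robust e 0.
Proof.
apply/forallP => S1; apply/forallP => S2; apply/implyP => /and3P [h1 _ _].
apply/orP; left; rewrite /r_reachable h1 /=.
case/set0Pn: h1 => x xS; apply/existsP; exists x; by rewrite xS.
Qed.

Lemma rmax_robust n (e : rel 'I_n) : r_robust e (r_max e).
Proof.
rewrite /r_max; apply: (big_ind (fun x => r_robust e x)).
- exact: robust0.
- by move=> x y hx hy; rewrite /maxn; case: ifP.
- by [].
Qed.

Lemma rmax_ge n (e : rel 'I_n) r : (r < n.+1)%N -> r_robust e r -> (r <= r_max e)%N.
Proof.
move=> hr hrob; rewrite /r_max.
exact: (@leq_bigmax_cond _ (fun r : 'I_n.+1 => r_robust e r) (fun r => nat_of_ord r) (Ordinal hr)).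
Qed.

Lemma reach_le (R : realFieldType) n (e : rel 'I_n) (hs : simple_digraph e) (S : {set 'I_n}) (t : R) m :
  (forall k, (laplacian R e *m \col_i ((i \in S)%:R : R)) k 0 <= t) ->
  r_reachable e m S -> m%:R <= t.
Proof.
move=> H /andP [_ /existsP [i /andP [iS hm]]].
apply: le_trans (H i); rewrite Lind_in // ler_nat //.
Qed.

Lemma ind_sum n (S : {set 'I_n}) :
  ((const_mx 1 : 'rV[int]_n) *m \col_i ((i \in S)%:R : int)) 0 0 = #|S|%:R.
Proof.
rewrite mxE -sum_ind; apply eq_bigr => i _; by rewrite !mxE mul1r.
Qed.

Theorem corollary1 (R : realFieldType) (n : nat) (e : rel 'I_n)
    (hn : (2 <= n)%N) (hsimple : simple_digraph e) :
  (exists b : 'cV[int]_(n + n), milp_feasible e ((r_max e)%:R : R) b) /\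
  (forall (t : R) (b : 'cV[int]_(n + n)), milp_feasible e t b -> (r_max e)%:R <= t).
Proof.
split.
- have nr : ~~ r_robust e (r_max e).+1.
    apply/negP => h; have := robust_lt _ _ hn _ h; have := rmax_ge _ _ _ (leqW (robust_lt _ _ hn _ h)) h.
    lia.
  move: nr; rewrite negb_forall => /existsP [S1]; rewrite negb_forall => /existsP [S2].
  rewrite negb_imply => /andP [/and3P [n1 n2 dis] /norP [nr1 nr2]].
  move: nr1 nr2; rewrite /r_reachable n1 n2 /= => /existsPn nr1 /existsPn nr2.
  exists (col_mx (\col_i ((i \in S1)%:R : int)) (\col_i ((i \in S2)%:R : int))).
  split.
  + by rewrite ler0n.
  + move=> i; rewrite map_col_mx !map_ind mul_block_col !mul0mx addr0 add0r.
    have gen : forall S : {set 'I_n}, (forall x, ~~ ((x \in S) && ((r_max e).+1 <= #|in_nbrs e x :\: S|)%N)) ->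
       forall k, (laplacian R e *m \col_i ((i \in S)%:R : R)) k 0 <= (r_max e)%:R.
      move=> S hS k; case kS: (k \in S).
        rewrite Lind_in // ler_nat; have := hS k; rewrite kS /=; lia.
      apply: (le_trans (Lind_out _ _ _ hsimple S k _)); [by rewrite kS | by rewrite ler0n].
    case: (split_ordP i) => k ->; rewrite ?col_mxEu ?col_mxEd; exact: gen.
  + move=> i; case: (split_ordP i) => k ->; rewrite ?col_mxEu ?col_mxEd mxE;
      by case: (_ \in _).
  + move=> i; rewrite mul_row_col !mul1mx !mxE.
    case h1: (i \in S1); last by case: (_ \in _).
    by rewrite (disjointFr dis h1).
  + rewrite !mul_row_col !mul0mx addr0 add0r !ind_sum.
    have c1 : (0 < #|S1|)%N by rewrite card_gt0.
    have c2 : (0 < #|S2|)%N by rewrite card_gt0.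
    have cU : (#|S1| + #|S2| <= n)%N.
      rewrite -cardsUI (disjoint_setI0 dis) cards0 addn0.
      by rewrite -[X in (_ <= X)%N](card_ord n) max_card.
    rewrite !natz !lez_nat; split; apply/andP; split; lia.
- move=> t b [t0 hL hb hI [/andP [s1l s1u] /andP [s2l s2u]]].
  move: hL hb hI s1l s2l; rewrite -[b](vsubmxK b).
  set b1 := usubmx b; set b2 := dsubmx b => hL hb hI s1l s2l.
  have e1 : b1 = \col_i ((i \in [set k | b1 k 0 == 1])%:R : int).
    apply/matrixP => i j; rewrite ord1 mxE inE.
    have := hb (lshift n i); rewrite col_mxEu => /andP [h0 h1].
    case: eqP => [->//|]; lia.
  have e2 : b2 = \col_i ((i \in [set k | b2 k 0 == 1])%:R : int).
    apply/matrixP => i j; rewrite ord1 mxE inE.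
    have := hb (rshift n i); rewrite col_mxEd => /andP [h0 h1].
    case: eqP => [->//|]; lia.
  move: hL hI s1l s2l; rewrite e1 e2.
  set S1 := [set k | b1 k 0 == 1]; set S2 := [set k | b2 k 0 == 1] => hL hI s1l s2l.
  move: s1l s2l; rewrite !mul_row_col !mul0mx addr0 add0r !ind_sum natz lez_nat card_gt0 => s1l.
  rewrite natz lez_nat card_gt0 => s2l.
  have dis : [disjoint S1 & S2].
    apply/pred0P => k /=; apply/negbTE/negP => /andP [k1 k2].
    have := hI k; rewrite mul_row_col !mul1mx !mxE k1 k2.
    by [].
  have := rmax_robust _ e; move/forallP/(_ S1)/forallP/(_ S2).
  rewrite s1l s2l dis /= => /orP [] hr.
  + apply: (reach_le _ _ _ hsimple _ _ _ _ hr) => k.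
    have := hL (lshift n k); rewrite map_col_mx !map_ind mul_block_col !mul0mx addr0 col_mxEu //.
  + apply: (reach_le _ _ _ hsimple _ _ _ _ hr) => k.
    have := hL (rshift n k); rewrite map_col_mx !map_ind mul_block_col !mul0mx add0r col_mxEd //.
Qed.
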